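(* Let $\mathcal L$ be a finite propositional signature, $\Gamma$ a finite nonempty theory over $\mathcal L$, $\mathcal L'\supseteq\mathcal L$ a signature, and $M$ an HT-interpretation over $\mathcal L'$. Then $M\in E_s(\Gamma)$ (equivalence interpretations over $\mathcal L'$) if and only if $M|_{\mathcal L}$ is totality preserving and $M|_{\mathcal L}\models\bigvee_{\phi\in\Gamma}\bigwedge_{\psi\in\Gamma_\phi}\psi$, where $\Gamma_\phi=\{\neg\neg\psi\mid\psi\in\Gamma\}\cup\{\phi\to(\neg\neg a\to a)\mid a\in\mathcal L\}$.
   Context: A propositional signature is a set of atoms; formulas are built from atoms and $\bot$ with $\wedge,\vee,\to$; $\neg\phi$ abbreviates $\phi\to\bot$. An HT-interpretation over $\mathcal L'$ is a pair $(X,Y)$ with $X\subseteq Y\subseteq\mathcal L'$; total if $X=Y$. HT-satisfaction: $(X,Y)\models a$ iff $a\in X$; $(X,Y)\not\models\bot$; $\wedge,\vee$ componentwise; $(X,Y)\models\phi\to\psi$ iff (i) $(X,Y)\not\models\phi$ or $(X,Y)\models\psi$, and (ii) $Y\models\phi\to\psi$ classically. A theory is satisfied iff each member is. A here-countermodel of $\Gamma$ is an $(X,Y)$ with $(X,Y)\not\models\Gamma$ and $Y\models\Gamma$; $E_s(\Gamma)$ is the set of HT-interpretations that are total HT-models of $\Gamma$ or here-countermodels of $\Gamma$. For $M=(X,Y)$ over $\mathcal L'$, $M|_{\mathcal L}=(X\cap\mathcal L,Y\cap\mathcal L)$; the restriction is totality preserving if $X\subsetneq Y$ implies $X\cap\mathcal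 L\subsetneq Y\cap\mathcal L$. *)

(* Defs.v *)
From Stdlib Require Import List Classical.
Import ListNotations.
Set Implicit Arguments.

Inductive formula (atom : Type) : Type :=
| Atom : atom -> formula atom
| Bot : formula atom
| And : formula atom -> formula atom -> formula atom
| Or : formula atom -> formula atom -> formula atom
| Imp : formula atom -> formula atom -> formula atom.
Arguments Bot {atom}.

Definition Neg {atom : Type} (p : formula atom) : formula atom := Imp p Bot.

Fixpoint atoms {atom : Type} (p : formula atom) : list atom :=
  match p with
  | Atom a => [a]
  | Bot => []
  | And p q | Or p q | Imp p q => atoms p ++ atoms q
  end.

Definition over {atom : Type} (L : atom -> Prop) (p : formula atom) : Prop :=
  forall a, In a (atoms p) -> L a.

Definition aset (atom : Type) := atom -> Prop.
Definition subset {atom : Type} (X Y : aset atom) : Prop := forall a, X a -> Y a.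
Definition ssubset {atom : Type} (X Y : aset atom) : Prop := subset X Y /\ ~ subset Y X.
Definition seteq {atom : Type} (X Y : aset atom) : Prop := subset X Y /\ subset Y X.

Fixpoint csat {atom : Type} (Y : aset atom) (p : formula atom) : Prop :=
  match p with
  | Atom a => Y a
  | Bot => False
  | And p q => csat Y p /\ csat Y q
  | Or p q => csat Y p \/ csat Y q
  | Imp p q => csat Y p -> csat Y q
  end.

Fixpoint htsat {atom : Type} (X Y : aset atom) (p : formula atom) : Prop :=
  match p with
  | Atom a => X a
  | Bot => False
  | And p q => htsat X Y p /\ htsat X Y q
  | Or p q => htsat X Y p \/ htsat X Y q
  | Imp p q => (~ htsat X Y p \/ htsat X Y q) /\ csat Y (Imp p q)
  end.

Definition htsatT {atom : Type} (X Y : aset atom) (G : list (formula atom)) : Prop :=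
  forall p, In p G -> htsat X Y p.
Definition csatT {atom : Type} (Y : aset atom) (G : list (formula atom)) : Prop :=
  forall p, In p G -> csat Y p.

Definition ht_interp {atom : Type} (L' : aset atom) (X Y : aset atom) : Prop :=
  subset X Y /\ subset Y L'.

Definition here_counter {atom : Type} (G : list (formula atom)) (X Y : aset atom) : Prop :=
  ~ htsatT X Y G /\ csatT Y G.

Definition in_Es {atom : Type} (G : list (formula atom)) (X Y : aset atom) : Prop :=
  (seteq X Y /\ htsatT X Y G) \/ here_counter G X Y.

Definition restr {atom : Type} (L : list atom) (X : aset atom) : aset atom :=
  fun a => X a /\ In a L.

Definition totality_preserving {atom : Type} (L : list atom) (X Y : aset atom) : Prop :=
  ssubset X Y -> ssubset (restr L X) (restr L Y).

(* n-ary connectives over a nonempty list (the empty case is never used) *)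
Fixpoint bigAnd {atom : Type} (l : list (formula atom)) : formula atom :=
  match l with
  | [] => Imp Bot Bot
  | [p] => p
  | p :: l' => And p (bigAnd l')
  end.
Fixpoint bigOr {atom : Type} (l : list (formula atom)) : formula atom :=
  match l with
  | [] => Bot
  | [p] => p
  | p :: l' => Or p (bigOr l')
  end.

Definition Gamma_phi {atom : Type} (L : list atom) (G : list (formula atom))
  (phi : formula atom) : list (formula atom) :=
  map (fun psi => Neg (Neg psi)) G ++
  map (fun a => Imp phi (Imp (Neg (Neg (Atom a))) (Atom a))) L.

Definition char_formula {atom : Type} (L : list atom) (G : list (formula atom)) : formula atom :=
  bigOr (map (fun phi => bigAnd (Gamma_phi L G phi)) G).

(* Main.v *)
Require Import Defs.
From Stdlib Require Import List Classical.
Import ListNotations.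

Section S.
Variable atom : Type.

Lemma ext_sat (X Y X' Y' : aset atom) (p : formula atom) :
  (forall a, In a (atoms p) -> (X a <-> X' a) /\ (Y a <-> Y' a)) ->
  (csat Y p <-> csat Y' p) /\ (htsat X Y p <-> htsat X' Y' p).
Proof.
  induction p as [a| |p IHp q IHq|p IHp q IHq|p IHp q IHq]; simpl; intro H.
  - destruct (H a (or_introl eq_refl)); tauto.
  - tauto.
  - destruct IHp as [A B]. { intros; apply H; apply in_or_app; auto. }
    destruct IHq as [C D]. { intros; apply H; apply in_or_app; auto. } tauto.
  - destruct IHp as [A B]. { intros; apply H; apply in_or_app; auto. }
    destruct IHq as [C D]. { intros; apply H; apply in_or_app; auto. } tauto.
  - destruct IHp as [A B]. { intros; apply H; apply in_or_app; auto. }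
    destruct IHq as [C D]. { intros; apply H; apply in_or_app; auto. } tauto.
Qed.

Lemma persist (X Y : aset atom) p : subset X Y -> htsat X Y p -> csat Y p.
Proof.
  intro S; induction p; simpl; try tauto; try apply S; try (intros [A B]; auto).
Qed.

Lemma total_sat (Y : aset atom) p : htsat Y Y p <-> csat Y p.
Proof.
  induction p; simpl; try tauto.
  all: split; [tauto|]; intro H; split; [|tauto]; destruct (classic (csat Y p1)); tauto.
Qed.

Lemma bigAnd_sem (X Y : aset atom) l : l <> nil ->
  (htsat X Y (bigAnd l) <-> forall p, In p l -> htsat X Y p).
Proof.
  induction l as [|p l IH]; intro Hn; [congruence|].
  destruct l as [|q l].
  - simpl. split; [intros H r [E|[]]; subst; auto | intro H; auto].
  - change (htsat X Y (And p (bigAnd (q :: l))) <-> forall r, In r (p :: q :: l) -> htsat X Y r).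
    simpl htsat at 1. rewrite IH by congruence. split.
    + intros [A B] r [E|E]; [subst; auto| auto].
    + intro H; split; [apply H; left; auto| intros r Hr; apply H; right; auto].
Qed.

Lemma bigOr_sem (X Y : aset atom) l :
  (htsat X Y (bigOr l) <-> exists p, In p l /\ htsat X Y p).
Proof.
  induction l as [|p l IH].
  - simpl. split; [tauto| intros [p [[] _]]].
  - destruct l as [|q l].
    + simpl. split; [eauto| intros [r [[E|[]] H]]; subst; auto].
    + change (htsat X Y (Or p (bigOr (q :: l))) <-> exists r, In r (p :: q :: l) /\ htsat X Y r).
      simpl htsat at 1. rewrite IH. split.
      * intros [A|[r [B C]]]; [exists p; simpl; auto| exists r; simpl; auto].
      * intros [r [[E|E] C]]; [subst; auto| right; eauto].
Qed.

Lemma negneg_sem (X Y : aset atom) p : subset X Y ->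
  (htsat X Y (Neg (Neg p)) <-> csat Y p).
Proof.
  intro S; unfold Neg; simpl. pose proof (persist X Y p S).
  split.
  - intros [_ H0]. destruct (classic (csat Y p)); tauto.
  - intro H0; tauto.
Qed.

Lemma impa_sem (X Y : aset atom) phi a : subset X Y ->
  (htsat X Y (Imp phi (Imp (Neg (Neg (Atom a))) (Atom a))) <-> (htsat X Y phi -> Y a -> X a)).
Proof.
  intro S. pose proof (negneg_sem X Y (Atom a) S) as N. simpl in N.
  simpl. rewrite N. destruct (classic (Y a)); destruct (classic (htsat X Y phi)); tauto.
Qed.

Lemma Gphi_sem (X Y : aset atom) L G phi : subset X Y -> G <> nil ->
  (htsat X Y (bigAnd (Gamma_phi L G phi)) <->
   ((forall p, In p G -> csat Y p) /\ (htsat X Y phi -> forall a, In a L -> Y a -> X a))).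
Proof.
  intros S Hn. rewrite bigAnd_sem.
  2:{ unfold Gamma_phi; destruct G; simpl; congruence. }
  unfold Gamma_phi. split.
  - intro H. split.
    + intros p Hp. apply (negneg_sem X Y p S). apply H. apply in_or_app; left.
      apply in_map_iff; eauto.
    + intros Hp a Ha. apply (impa_sem X Y phi a S); auto. apply H. apply in_or_app; right.
      apply in_map_iff; eauto.
  - intros [A B] r Hr. apply in_app_or in Hr. destruct Hr as [Hr|Hr];
      apply in_map_iff in Hr; destruct Hr as [x [E Hx]]; subst.
    + apply negneg_sem; auto.
    + apply impa_sem; auto.
Qed.

End S.

Theorem mainTheorem8 (atom : Type) (L : list atom) (L' : atom -> Prop)
  (G : list (formula atom)) (X Y : atom -> Prop) :
  G <> nil ->
  (forall p, In p G -> over (fun a => In a L) p) ->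
  (forall a, In a L -> L' a) ->
  ht_interp L' X Y ->
  (in_Es G X Y <->
   (totality_preserving L X Y /\
    htsat (restr L X) (restr L Y) (char_formula L G))).
Proof.
  intros Hn Hov HL [SXY SYL'].
  set (X0 := restr L X). set (Y0 := restr L Y).
  assert (S0 : subset X0 Y0).
  { intros a [A B]; split; auto. }
  assert (R : forall p, In p G -> (csat Y p <-> csat Y0 p) /\ (htsat X Y p <-> htsat X0 Y0 p)).
  { intros p Hp. apply ext_sat. intros a Ha. pose proof (Hov p Hp a Ha).
    unfold X0, Y0, restr; tauto. }
  unfold char_formula. rewrite bigOr_sem.
  assert (CH : (exists f, In f (map (fun phi => bigAnd (Gamma_phi L G phi)) G) /\ htsat X0 Y0 f)
     <-> (forall p, In p G -> csat Y p) /\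
         (exists phi, In phi G /\ (htsat X Y phi -> forall a, In a L -> Y a -> X a))).
  { split.
    - intros [f [Hf Hs]]. apply in_map_iff in Hf. destruct Hf as [phi [E Hphi]]; subst.
      apply Gphi_sem in Hs; auto. destruct Hs as [A B]. split.
      + intros p Hp. apply (R p Hp). auto.
      + exists phi; split; auto. intros H a Ha Ya.
        assert (X0 a) by (apply B; [apply (R phi Hphi); auto| auto | split; auto]).
        destruct H0; auto.
    - intros [A [phi [Hphi B]]]. exists (bigAnd (Gamma_phi L G phi)). split.
      + apply in_map_iff; eauto.
      + apply Gphi_sem; auto. split.
        * intros p Hp; apply (R p Hp); auto.
        * intros H a Ha [Ya _]. split; auto. apply B; auto. apply (R phi Hphi); auto. }
  rewrite CH. clear CH.
  unfold in_Es, here_counter, htsatT, csatT, totality_preserving, ssubset, seteq.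
  split.
  - intros [[[E1 E2] H]|[H1 H2]].
    + split.
      * intros [_ C]; exfalso; auto.
      * split.
        { intros p Hp. apply (total_sat _ Y p). apply (proj2 (ext_sat _ X Y Y Y p (fun a _ => conj (conj (E1 a) (E2 a)) (iff_refl _)))). auto. }
        { destruct G as [|phi G']; [congruence|]. exists phi; split; [left; auto|].
          intros _ a _ Ya. auto. }
    + split.
      * intros _. split; [auto|]. intro C. apply H1. intros p Hp.
        apply (R p Hp). apply (ext_sat _ X0 Y0 Y0 Y0 p).
        { intros a _. split; [split; [apply S0| apply C]| tauto]. }
        apply total_sat. apply (R p Hp). auto.
      * split; auto. apply NNPP; intro C. apply H1. intros p Hp.
        destruct (classic (htsat X Y p)) as [P|P]; auto. exfalso; apply C.
        exists p; split; auto; tauto.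
  - intros [TP [A [phi [Hphi B]]]].
    destruct (classic (forall p, In p G -> htsat X Y p)) as [AllH|NAll]; [left|right; auto].
    assert (E0 : forall a, In a L -> Y a -> X a) by (apply B; auto).
    assert (SYX : subset Y X).
    { apply NNPP; intro C. destruct (TP (conj SXY C)) as [_ D]. apply D.
      intros a [Ya Ha]. split; auto. }
    split; [split; auto| auto].
Qed.
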